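(* Let $d\geq 2$ and let $\mathcal{D}\subset\mathbb{R}^d$ be bounded and convex with non-empty interior. If $\alpha=(\alpha_1,\ldots,\alpha_d)\in\mathbb{R}^d$ is such that \[\sup_{T_1,\ldots,T_d\geq1} L(\alpha,\mathcal{D}_{T^{-1}})=\infty,\] then \[\liminf_{n\to\infty} n\,\|n\alpha_1\|_{\mathbb{R}/\mathbb{Z}}\cdots\|n\alpha_d\|_{\mathbb{R}/\mathbb{Z}}=0.\]
   Context: For a set $\mathcal{D}\subset\mathbb{R}^d$ and $q\in\mathcal{D}$, $\tau(q,\mathcal{D})=\min\{n\in\mathbb{N}^*\mid q+n\alpha\in\mathcal{D}+\mathbb{Z}^d\}$ with $\mathbb{N}^*=\{1,2,\ldots\}$, and $L(\alpha,\mathcal{D})$ is the number of distinct values of $\tau(q,\mathcal{D})$ as $q$ ranges over $\mathcal{D}$. For $T=\operatorname{diag}(T_1,\ldots,T_d)$ with $T_i>0$, $\mathcal{D}_{T^{-1}}=\{xT^{-1}\mid x\in\mathcal{D}\}$. $\|x\|_{\mathbb{R}/\mathbb{Z}}$ denotes the distance from $x$ to the nearest integer. *)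

(* Defs.v *)
From mathcomp Require Import all_boot all_order all_algebra.
From mathcomp Require Import reals.
Set Implicit Arguments. Unset Strict Implicit. Unset Printing Implicit Defensive.
Import Order.TTheory GRing.Theory Num.Theory.
Local Open Scope ring_scope.

Section Defs.
Variables (R : realType) (d : nat).

Definition bounded_set (D : ('I_d -> R) -> Prop) : Prop :=
  exists M : R, forall x, D x -> forall i, `|x i| <= M.

Definition convex_set (D : ('I_d -> R) -> Prop) : Prop :=
  forall x y t, D x -> D y -> 0 <= t -> t <= 1 ->
    D (fun i => t * x i + (1 - t) * y i).

(* non-empty interior (for the sup-norm / equivalently Euclidean topology) *)
Definition nonempty_interior (D : ('I_d -> R) -> Prop) : Prop :=
  exists x, exists e : R, 0 < e /\
    forall y, (forall i, `|y i - x i| < e) -> D y.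

Definition in_D_plus_Zd (D : ('I_d -> R) -> Prop) (y : 'I_d -> R) : Prop :=
  exists k : 'I_d -> int, D (fun i => y i - (k i)%:~R).

Definition is_tau (alpha : 'I_d -> R) (D : ('I_d -> R) -> Prop)
    (q : 'I_d -> R) (n : nat) : Prop :=
  (0 < n)%N /\ in_D_plus_Zd D (fun i => q i + n%:R * alpha i) /\
  forall m : nat, (0 < m)%N ->
    in_D_plus_Zd D (fun i => q i + m%:R * alpha i) -> (n <= m)%N.

Definition tau_values (alpha : 'I_d -> R) (D : ('I_d -> R) -> Prop)
    (n : nat) : Prop :=
  exists q, D q /\ is_tau alpha D q n.

(* L(alpha, D) >= N : there are at least N distinct values of tau *)
Definition L_ge (alpha : 'I_d -> R) (D : ('I_d -> R) -> Prop) (N : nat) : Prop :=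
  exists s : seq nat, uniq s /\ size s = N /\
    forall n, n \in s -> tau_values alpha D n.

Definition scale_inv (T : 'I_d -> R) (D : ('I_d -> R) -> Prop) :
    ('I_d -> R) -> Prop :=
  fun y => exists x, D x /\ forall i, y i = x i / T i.

End Defs.

Definition dist_Z (R : realType) (x : R) : R :=
  Num.min (x - (Num.floor x)%:~R) ((Num.floor x)%:~R + 1 - x).

(* Main.v *)
Require Import Defs.
From mathcomp Require Import all_boot all_order all_algebra.
From mathcomp Require Import reals.
From mathcomp Require Import ring lra zify.
From Stdlib Require Import Classical.
Import Order.TTheory GRing.Theory Num.Theory.
Local Open Scope ring_scope.
Section S.
Variables (R : realType) (d : nat) (alpha : 'I_d -> R).

Definition frc (x : R) : R := x - (Num.floor x)%:~R.
Lemma frc_ge0 x : 0 <= frc x.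
Proof. by rewrite /frc subr_ge0 Num.Theory.floor_le. Qed.
Lemma frc_lt1 x : frc x < 1.
Proof. have := Num.Theory.floorD1_gt x; rewrite /frc intrD; lra. Qed.

Lemma card_dff (C : 'I_d -> nat) :
  #|{dffun forall i : 'I_d, 'I_(C i)}| = (\prod_(i < d) C i)%N.
Proof.
rewrite card_dep_ffun foldrE big_map big_enum /=.
by apply: eq_bigr => i _; rewrite card_ord.
Qed.

Lemma dirichlet (w : 'I_d -> R) : (forall i, 0 < w i <= 1) ->
  exists m : nat, (0 < m)%N /\ m%:R * \prod_i w i <= 2 ^+ d /\
  exists k : 'I_d -> int, forall i, `|m%:R * alpha i - (k i)%:~R| < w i.
Proof.
move=> hw.
pose C i := (Num.truncn (w i)^-1).+1.
pose P := (\prod_(i < d) C i)%N.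
pose cell (j : nat) (i : 'I_d) := Num.truncn (frc (j%:R * alpha i) / w i).
pose f (j : 'I_P.+1) : {dffun forall i : 'I_d, 'I_(C i)} :=
  [ffun i => inord (cell j i)].
have cellE j i : (cell j i < C i)%N.
  rewrite ltnS; apply: le_truncn.
  have [w0 _] := andP (hw i).
  rewrite ler_pdivrMr // mulVf ?gt_eqF //.
  exact: ltW (frc_lt1 _).
have [j1 [j2 [nj fj]]] : exists j1 j2 : 'I_P.+1, j1 <> j2 /\ f j1 = f j2.
  apply: NNPP => H.
  have inj : injective f.
    move=> a b fab; apply: NNPP => nab; apply: H; exists a, b; split => //.
  by have := @leq_card _ _ f inj; rewrite card_dff card_ord ltnn.
have key : forall (a b : 'I_P.+1), f a = f b -> (a < b)%N -> exists m : nat, (0 < m)%N /\ m%:R * \prod_i w i <= 2 ^+ d /\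
  exists k : 'I_d -> int, forall i, `|m%:R * alpha i - (k i)%:~R| < w i.
  move=> a b fab ab.
  exists (b - a)%N; split; first by rewrite subn_gt0.
  split.
    apply: (@le_trans _ _ (P%:R * \prod_i w i)).
      rewrite ler_wpM2r ?prodr_ge0 // ?ler_nat.
        by move=> i _; have /andP[/ltW] := hw i.
      rewrite leq_subLR; apply: leq_trans (leq_addl _ _); rewrite -ltnS; exact: ltn_ord.
    rewrite natr_prod -big_split /=.
    apply: (@le_trans _ _ (\prod_(i < d) (2:R))); last by rewrite prodr_const card_ord.
    apply: ler_prod => i _; have /andP[w0 w1] := hw i.
    have ht : (Num.truncn (w i)^-1)%:R * w i <= 1.
      have wi0 : 0 <= (w i)^-1 by rewrite invr_ge0 ltW.
      have : (Num.truncn (w i)^-1)%:R <= 1 / w i.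
        by rewrite div1r; have /andP[] := Num.Theory.truncn_itv wi0.
      by rewrite ler_pdivlMr.
    rewrite mulr_ge0 ?(ltW w0) //= /C -natr1 mulrDl mul1r; lra.
  exists (fun i => Num.floor (b%:R * alpha i) - Num.floor (a%:R * alpha i)) => i.
  have := congr1 (fun g : {dffun forall i : 'I_d, 'I_(C i)} => nat_of_ord (g i)) fab; rewrite /f !ffunE /= !inordK ?cellE //.
  rewrite /cell => ce.
  have [w0 _] := andP (hw i).
  have h1 := Num.Theory.truncn_itv (divr_ge0 (frc_ge0 (a%:R * alpha i)) (ltW w0)).
  have h2 := Num.Theory.truncn_itv (divr_ge0 (frc_ge0 (b%:R * alpha i)) (ltW w0)).
  rewrite ce in h1.
  have -> : (b - a)%N%:R * alpha i - (Num.floor (b%:R * alpha i) - Num.floor (a%:R * alpha i))%:~R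
     = frc (b%:R * alpha i) - frc (a%:R * alpha i).
    rewrite /frc natrB ?(ltnW ab) // intrB; ring.
  move: h1 h2; set u := frc _; set v := frc _; set t := Num.truncn _.
  move=> /andP[h1 h1'] /andP[h2 h2'].
  rewrite ler_pdivlMr // in h1; rewrite ler_pdivlMr // in h2.
  rewrite ltr_pdivrMr // in h1'; rewrite ltr_pdivrMr // in h2'.
  rewrite -natr1 mulrDl mul1r in h1'; rewrite -natr1 mulrDl mul1r in h2'.
  rewrite ltr_norml; apply/andP; split; lra.
case: (ltngtP j1 j2) => h; first exact: key fj h.
  exact: key (esym fj) h.
by case: nj; apply: val_inj.
Qed.


Definition BA (c : R) := forall m : nat, (0 < m)%N -> forall k : 'I_d -> int,
  c <= m%:R * \prod_i `|m%:R * alpha i - (k i)%:~R|.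

Lemma dir_shell c (hc : BA c) (w : 'I_d -> R) : (forall i, 0 < w i <= 1) ->
  exists m : nat, (0 < m)%N /\ m%:R * \prod_i w i <= 2 ^+ d /\
  exists k : 'I_d -> int, forall i,
    c / 2 ^+ d * w i <= `|m%:R * alpha i - (k i)%:~R| < w i.
Proof.
move=> hw; have [m [m0 [mb [k hk]]]] := dirichlet w hw.
exists m; split => //; split => //; exists k => i; rewrite hk andbT.
set x := fun j => `|m%:R * alpha j - (k j)%:~R|.
have hc1 := hc m m0 k; rewrite -/x in hc1.
pose y j := if j == i then x i else w j.
have xy : \prod_j x j <= \prod_j y j.
  apply: ler_prod => j _; rewrite /y /x normr_ge0 /=.
  by case: eqP => [->|_] //; apply: ltW.
have ew : \prod_j w j = w i * \prod_(j | j != i) w j by rewrite (bigD1 i).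
have ey : \prod_j y j = x i * \prod_(j | j != i) w j.
  rewrite (bigD1 i) //= /y eqxx; congr (_ * _); apply: eq_bigr => j /negbTE -> //.
have w0 : 0 < w i by have /andP[] := hw i.
have p0 : 0 <= \prod_(j | j != i) w j by apply: prodr_ge0 => j _; have /andP[/ltW] := hw j.
have m0' : 0 <= m%:R :> R by [].
have : c * w i <= x i * 2 ^+ d.
  apply: (le_trans (y := m%:R * \prod_j y j * w i)).
    rewrite ler_wpM2r ?(ltW w0) //; apply: (le_trans hc1); rewrite ler_wpM2l //.
  rewrite ey; move: mb; rewrite ew => mb.
  have xi0 : 0 <= x i by apply: normr_ge0.
  have := ler_wpM2l xi0 mb.
  suff -> : m%:R * (x i * \prod_(j | j != i) w j) * w i = x i * (m%:R * (w i * \prod_(j | j != i) w j)) by [].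
  ring.
rewrite mulrAC ler_pdivrMr ?exprn_gt0 //.
Qed.

Lemma cover c (c0 : 0 < c) (hc : BA c) (d0 : (0 < d)%N) R0 (R00 : 0 < R0) :
  exists Kc : R, 0 < Kc /\ forall r : 'I_d -> R, (forall i, 0 < r i <= 1) ->
  forall z : 'I_d -> R, (forall i, `|z i| <= R0 * r i) ->
  exists n : nat, (0 < n)%N /\ n%:R * \prod_i r i <= Kc /\
  exists k : 'I_d -> int, forall i, `|n%:R * alpha i - (k i)%:~R - z i| < r i.
Proof.
have dR : 0 < d%:R :> R by rewrite ltr0n.
have dR1 : 1 <= d%:R :> R by rewrite ler1n.
pose a : R := (4 * d%:R)^-1.
have a0 : 0 < a by rewrite invr_gt0; lra.
have da : d%:R * a = 4^-1 by rewrite /a invfM mulrCA mulfV ?mulr1 // lt0r_neq0.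
have a1 : a <= 1 by rewrite /a invf_le1; lra.
have e0 : 0 < 2 ^+ d :> R by rewrite exprn_gt0.
pose beta := c / 2 ^+ d * a.
have beta0 : 0 < beta by rewrite /beta !mulr_gt0 // invr_gt0.
pose Kk := R0 / beta + 1.
have Kk1 : 1 <= Kk by rewrite /Kk lerDr divr_ge0 ?ltW.
have Kk0 : 0 < Kk by lra.
pose eps := (8 * d%:R * Kk)^-1.
have eps0 : 0 < eps by rewrite invr_gt0 !mulr_gt0 //; lra.
have deps : d%:R * Kk * eps = 8^-1.
  by rewrite /eps; field; rewrite (lt0r_neq0 dR) (lt0r_neq0 Kk0).
have eps1 : eps <= 1 by rewrite invf_le1 ?mulr_gt0 //; nra.
pose eta := a * eps.
have eta0 : 0 < eta by rewrite mulr_gt0.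
have etaa : eta <= a by apply: ler_piMr => //; apply: ltW.
have etae : eta <= eps by apply: ler_piMl => //; apply: ltW.
pose X := c * eta ^+ d / (2 * d%:R * Kk * 2 ^+ d).
have X0 : 0 < X by rewrite /X !mulr_gt0 ?invr_gt0 ?exprn_gt0 // !mulr_gt0 //; lra.
pose delta := Num.min (8^-1) X.
have delta0 : 0 < delta by rewrite /delta lt_min X0 andbT invr_gt0; lra.
have delta8 : delta <= 8^-1 by rewrite /delta ge_min lexx.
have deltaX : delta <= X by rewrite /delta ge_min lexx orbT.
have delta1 : delta <= 1 by apply: (le_trans delta8); rewrite invf_le1; lra.
have Dd : delta ^+ d <= X by apply: le_trans deltaX; apply: ler_iXnr => //; apply: ltW.
have D0 : 0 < delta ^+ d by rewrite exprn_gt0.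
exists (2 * 2 ^+ d / delta ^+ d); split; first by rewrite !mulr_gt0 ?invr_gt0.
move=> r hr z hz.
have r0 i : 0 < r i by have /andP[] := hr i.
have r1 i : r i <= 1 by have /andP[] := hr i.
have Pr0 : 0 < \prod_i r i by apply: prodr_gt0 => i _.
pose W (l i : 'I_d) := (if i == l then a else eps) * r i.
have W0 l i : 0 < W l i <= 1.
  rewrite /W; case: eqP => _; rewrite mulr_gt0 //=.
    exact: le_trans (ler_piMr (ltW a0) (r1 i)) a1.
  exact: le_trans (ler_piMr (ltW eps0) (r1 i)) eps1.
have WP l : eta ^+ d * \prod_i r i <= \prod_i W l i.
  have pc : \prod_(i < d) eta = eta ^+ d by rewrite prodr_const card_ord.
  rewrite -pc -big_split /=.
  apply: ler_prod => i _; rewrite mulr_ge0 ?(ltW eta0) ?(ltW (r0 i)) //= /W ler_wpM2r ?(ltW (r0 i)) //.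
  by case: eqP.
have hv : forall l : 'I_d, exists p : nat * ('I_d -> int),
   (0 < p.1)%N /\ p.1%:R * \prod_i W l i <= 2 ^+ d /\
   forall i, c / 2 ^+ d * W l i <= `|p.1%:R * alpha i - (p.2 i)%:~R| < W l i.
  move=> l; have [m [m0 [mb [k hk]]]] := dir_shell c hc (W l) (W0 l).
  by exists (m, k).
have [F hF] := fin_all_exists hv.
pose ml l := (F l).1.
pose kk l := (F l).2.
pose v l i := (ml l)%:R * alpha i - (kk l i)%:~R.
have ml0 l : (0 < ml l)%N by have [] := hF l.
have mlb l : (ml l)%:R * \prod_i r i * eta ^+ d <= 2 ^+ d.
  have [_ [h _]] := hF l; apply: le_trans h.
  by rewrite -mulrA ler_wpM2l // mulrC WP.
have vdiag l : beta * r l <= `|v l l| < a * r l.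
  have [_ [_ h]] := hF l; move: (h l); rewrite /W eqxx /beta.
  by rewrite !mulrA.
have voff l i : i != l -> `|v l i| < eps * r i.
  move=> il; have [_ [_ h]] := hF l; move: (h i); rewrite /W (negbTE il).
  by case/andP.
have hdr : forall i, 0 < delta * r i <= 1.
  move=> i; rewrite mulr_gt0 //=; exact: le_trans (ler_piMr (ltW delta0) (r1 i)) delta1.
have [m0 [m00 [m0b [k0 hk0]]]] := dir_shell c hc (fun i => delta * r i) hdr.
have Pd : \prod_i (delta * r i) = delta ^+ d * \prod_i r i.
  have pc : \prod_(i < d) delta = delta ^+ d by rewrite prodr_const card_ord.
  by rewrite -pc -big_split.
have m0up : m0%:R * (delta ^+ d * \prod_i r i) <= 2 ^+ d by rewrite -Pd.
have m0lo : c <= m0%:R * (delta ^+ d * \prod_i r i).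
  apply: (le_trans (hc m0 m00 k0)); rewrite -Pd ler_wpM2l //.
  apply: ler_prod => i _; rewrite normr_ge0 /=.
  by have /andP[_ /ltW] := hk0 i.
pose kl l := Num.floor (z l / v l l + 2^-1).
have vll0 l : 0 < `|v l l|.
  have /andP[h _] := vdiag l; apply: lt_le_trans h; by rewrite mulr_gt0.
have vne0 l : v l l != 0 by rewrite -normr_gt0 vll0.
have klt l : `|(kl l)%:~R - z l / v l l| <= 2^-1.
  have h1 := Num.Theory.floor_le (z l / v l l + 2^-1).
  have h2 := Num.Theory.floorD1_gt (z l / v l l + 2^-1).
  rewrite intrD -/(kl l) in h2; rewrite -/(kl l) in h1.
  rewrite ler_norml; apply/andP; split; clear -h1 h2; lra.
have klb l : `|((kl l)%:~R : R)| <= Kk.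
  have ht : `|z l / v l l| <= R0 / beta.
    rewrite normrM normfV ler_pdivrMr // mulrC mulrA.
    apply: (le_trans (hz l)).
    have /andP[h _] := vdiag l.
    have -> : `|v l l| * R0 / beta = R0 / beta * `|v l l| by ring.
    have -> : R0 * r l = R0 / beta * (beta * r l).
      by rewrite mulrA divfK // lt0r_neq0.
    by rewrite ler_wpM2l // divr_ge0 ?ltW.
  have := ler_normD ((kl l)%:~R - z l / v l l) (z l / v l l); rewrite subrK.
  rewrite /Kk; move: (klt l) ht; set A := `|_|; set B := `|_|; set C := `|_|; clear; lra.
have klerr l : `|(kl l)%:~R * v l l - z l| <= `|v l l| / 2.
  have -> : (kl l)%:~R * v l l - z l = ((kl l)%:~R - z l / v l l) * v l l.
    by rewrite mulrBl mulfVK.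
  rewrite normrM mulrC ler_wpM2l //; by rewrite -div1r.
pose S := \sum_l `|((kl l)%:~R : R)| * (ml l)%:R.
have S0 : 0 <= S by apply: sumr_ge0 => l _; rewrite mulr_ge0.
have SPr : S * \prod_i r i * eta ^+ d <= d%:R * (Kk * 2 ^+ d).
  rewrite /S !mulr_suml.
  apply: (le_trans (y := \sum_(l < d) (Kk * 2 ^+ d))).
    apply: ler_sum => l _; rewrite -!mulrA; apply: ler_pM => //.
      by rewrite !mulr_ge0 // ?exprn_ge0 ?ltW.
    by rewrite !mulrA.
  by rewrite sumr_const card_ord mulr_natl.
have SQ : S <= m0%:R / 2.
  have Q0 : 0 < \prod_i r i * eta ^+ d * delta ^+ d by rewrite !mulr_gt0 // exprn_gt0.
  rewrite -(ler_pM2r Q0).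
  have h2 : delta ^+ d * (2 * d%:R * Kk * 2 ^+ d) <= c * eta ^+ d.
    by move: Dd; rewrite /X ler_pdivlMr // !mulr_gt0 //; lra.
  have h3 : c * eta ^+ d <= m0%:R * (delta ^+ d * \prod_i r i) * eta ^+ d.
    by rewrite ler_wpM2r // exprn_ge0 // ltW.
  have h1 : S * \prod_i r i * eta ^+ d * delta ^+ d <= d%:R * (Kk * 2 ^+ d) * delta ^+ d.
    by rewrite ler_wpM2r // ltW.
  have e1 : S * (\prod_i r i * eta ^+ d * delta ^+ d) = S * \prod_i r i * eta ^+ d * delta ^+ d by ring.
  have e2 : m0%:R / 2 * (\prod_i r i * eta ^+ d * delta ^+ d) = (m0%:R * (delta ^+ d * \prod_i r i) * eta ^+ d) / 2 by ring.
  have e3 : d%:R * (Kk * 2 ^+ d) * delta ^+ d = (delta ^+ d * (2 * d%:R * Kk * 2 ^+ d)) / 2 by field.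
  rewrite e1 e2; rewrite e3 in h1; clear -h1 h2 h3; lra.
pose Nint : int := (m0%:Z + \sum_l kl l * (ml l)%:Z)%R.
pose NR : R := m0%:R + \sum_l (kl l)%:~R * (ml l)%:R.
have NE : Nint%:~R = NR.
  rewrite /Nint /NR rmorphD rmorph_sum /=; congr (_ + _).
  by apply: eq_bigr => l _; rewrite rmorphM.
have NS : `|NR - m0%:R| <= S.
  rewrite /NR addrC addKr; apply: (le_trans (ler_norm_sum _ _ _)).
  by apply: ler_sum => l _; rewrite normrM normr_nat.
have NR0 : 0 < NR.
  have m0R : 0 < m0%:R :> R by rewrite ltr0n.
  move: NS; rewrite ler_norml => /andP[h _]; clear -h SQ m0R; lra.
have Nint0 : 0 < Nint by rewrite -(ltr0z R) NE.
exists `|Nint|%N.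
have nE : (`|Nint|%N)%:R = NR :> R by rewrite natr_absz gtr0_norm ?NE.
split; first by rewrite absz_gt0 lt0r_neq0.
split.
  rewrite nE ler_pdivlMr //.
  move: NS; rewrite ler_norml => /andP[_ h].
  have hNR : NR <= 3 / 2 * m0%:R by clear -h SQ; lra.
  apply: (le_trans (y := 3 / 2 * (m0%:R * (delta ^+ d * \prod_i r i)))).
    have -> : NR * \prod_i r i * delta ^+ d = NR * (delta ^+ d * \prod_i r i) by ring.
    by rewrite [X in _ <= X]mulrA ler_wpM2r // mulr_ge0 // ?exprn_ge0 ?(ltW delta0) ?(ltW Pr0).
  clear -m0up e0; lra.
exists (fun i => k0 i + \sum_l kl l * kk l i) => i.
pose x0 := m0%:R * alpha i - (k0 i)%:~R.
pose T l := (kl l)%:~R * v l i - (if l == i then z i else 0).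
have eq : (`|Nint|%N)%:R * alpha i - (k0 i + \sum_l kl l * kk l i)%:~R - z i
    = x0 + \sum_l T l.
  have ed : \sum_l (if l == i then z i else 0) = z i.
    by rewrite (bigD1 i) //= eqxx big1 ?addr0 // => l /negbTE ->.
  have e1 : \sum_l (kl l)%:~R * v l i
      = (\sum_l (kl l)%:~R * (ml l)%:R) * alpha i - \sum_l ((kl l)%:~R * (kk l i)%:~R).
    rewrite mulr_suml -sumrB; apply: eq_bigr => l _; rewrite /v; ring.
  rewrite /T sumrB ed e1 nE /NR /x0 intrD rmorph_sum /=.
  have e5 : \sum_(l < d) ((kl l * kk l i)%:~R : R) = \sum_l (kl l)%:~R * (kk l i)%:~R by apply: eq_bigr => l _; rewrite intrM.
  rewrite e5.
  ring.
rewrite eq.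
have hT : forall l, `|T l| <= (a / 2 + Kk * eps) * r i.
  move=> l; rewrite /T; case: eqP => [->|/eqP li].
    apply: (le_trans (klerr i)); have /andP[_ h] := vdiag i.
    have : 0 <= Kk * eps * r i by rewrite !mulr_ge0 ?ltW.
    clear -h; lra.
  rewrite subr0 normrM.
  have h : `|v l i| < eps * r i by apply: voff; rewrite eq_sym.
  have h' : `|v l i| * `|(kl l)%:~R| <= eps * r i * Kk.
    by apply: ler_pM => //; apply: ltW.
  have : 0 <= a * r i by rewrite mulr_ge0 ?ltW.
  rewrite mulrC; clear -h'; lra.
have hs : `|\sum_l T l| <= d%:R * ((a / 2 + Kk * eps) * r i).
  apply: (le_trans (ler_norm_sum _ _ _)).
  apply: (le_trans (y := \sum_(l < d) ((a / 2 + Kk * eps) * r i))).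
    by apply: ler_sum => l _; exact: hT.
  by rewrite sumr_const card_ord mulr_natl.
have e4 : d%:R * ((a / 2 + Kk * eps) * r i) = (d%:R * a / 2 + d%:R * Kk * eps) * r i by ring.
rewrite e4 deps da in hs.
have hx0 : `|x0| < delta * r i by have /andP[] := hk0 i.
have : delta * r i <= 8^-1 * r i by rewrite ler_wpM2r // ltW.
have := ler_normD x0 (\sum_l T l).
have := r0 i.
clear -hs hx0; lra.
Qed.
End S.
Arguments BA {R d}.
Arguments cover {R d}.

Lemma dist_le (R : realType) (x : R) (k : int) : dist_Z x <= `|x - k%:~R|.
Proof.
rewrite /dist_Z; set f := Num.floor x.
have h1 := Num.Theory.floor_le x; have h2 := Num.Theory.floorD1_gt x.
rewrite -/f intrD in h2; rewrite -/f in h1.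
case: (lerP k f) => hk.
  have : (k%:~R : R) <= f%:~R by rewrite ler_int.
  move=> hk'; rewrite ge_min; apply/orP; left.
  rewrite ger0_norm; lra.
have : ((f + 1)%:~R : R) <= k%:~R by rewrite ler_int; lia.
rewrite intrD => hk'; rewrite ge_min; apply/orP; right.
rewrite ler0_norm; lra.
Qed.
Arguments dist_le {R}.

Lemma dist_ge0 (R : realType) (x : R) : 0 <= dist_Z x.
Proof.
rewrite /dist_Z le_min.
have h1 := Num.Theory.floor_le x; have h2 := Num.Theory.floorD1_gt x.
rewrite intrD in h2; apply/andP; split; lra.
Qed.
Arguments dist_ge0 {R}.

Lemma dist_eq0 (R : realType) (x : R) : dist_Z x = 0 -> exists z : int, x = z%:~R.
Proof.
rewrite /dist_Z => h.
have h1 := Num.Theory.floor_le x; have h2 := Num.Theory.floorD1_gt x.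
rewrite intrD in h2.
case: (leP (x - (Num.floor x)%:~R) ((Num.floor x)%:~R + 1 - x)) => hm.
  rewrite (min_idPl hm) in h; exists (Num.floor x); lra.
rewrite (min_idPr (ltW hm)) in h; exists (Num.floor x + 1); rewrite intrD; lra.
Qed.
Arguments dist_eq0 {R}.

Lemma get_BA (R : realType) (d : nat) (alpha : 'I_d -> R) (eps : R) (N0 : nat) :
  0 < eps ->
  (forall n, (N0 <= n)%N -> eps <= n%:R * \prod_(i < d) dist_Z (n%:R * alpha i)) ->
  exists c, 0 < c /\ BA alpha c.
Proof.
move=> eps0 H.
pose f (n : nat) := n%:R * \prod_(i < d) dist_Z (n%:R * alpha i).
have pos : forall n, (0 < n)%N -> 0 < f n.
  move=> n n0; rewrite /f mulr_gt0 ?ltr0n //.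
  rewrite lt_neqAle prodr_ge0 ?andbT; last by move=> i _; apply: dist_ge0.
  apply/negP => /eqP h0; move/esym/eqP: h0 => /prodf_eq0 [i _ /eqP hi].
  have [z hz] := dist_eq0 _ hi.
  pose n' := (n * N0.+1)%N.
  have hn' : (N0 <= n')%N by rewrite /n' -[X in (X <= _)%N]mul1n leq_mul // ltnW.
  have := H n' hn'.
  have -> : \prod_(i < d) dist_Z (n'%:R * alpha i) = 0.
    apply/eqP/prodf_eq0; exists i => //; rewrite eq_le dist_ge0 andbT.
    apply: (le_trans (dist_le _ (N0.+1%:Z * z))).
    rewrite /n' natrM mulrAC hz intrM mulrC.
    by rewrite subrr normr0.
  rewrite mulr0; lra.
have low : forall N, exists c, 0 < c /\ forall n, (0 < n)%N -> (n < N)%N -> c <= f n.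
  elim => [|N [c [c0 hc]]]; first by exists 1; split => // n _.
  exists (Num.min c (f (maxn N 1))); split.
    by rewrite lt_min c0 pos // leq_max orbT.
  move=> n n0; rewrite ltnS leq_eqVlt => /orP[/eqP en|hn].
    rewrite ge_min; apply/orP; right.
    by rewrite en in n0 *; rewrite (maxn_idPl n0).
  by rewrite ge_min (hc n n0 hn).
have [c [c0 hc]] := low N0.
exists (Num.min eps c); split; first by rewrite lt_min eps0.
move=> m m0 k.
have hf : Num.min eps c <= f m.
  case: (ltnP m N0) => hm; rewrite ge_min.
    by rewrite (hc m m0 hm) orbT.
  by rewrite (H m hm).
apply: (le_trans hf); rewrite /f ler_wpM2l //.
apply: ler_prod => i _; rewrite dist_ge0 /=; exact: dist_le.
Qed.

Lemma count_sp (R : realType) (s : seq nat) (B g : R) : 0 < g -> uniq s ->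
  (forall n, n \in s -> n%:R <= B) ->
  (forall n n', n \in s -> n' \in s -> (n < n')%N -> g <= n'%:R - n%:R) ->
  (size s <= (Num.truncn (B / g)).+1)%N.
Proof.
move=> g0 us hB hg.
pose f (n : nat) := Num.truncn (n%:R / g).
have finj : {in s &, injective f}.
  have key : forall n n', n \in s -> n' \in s -> (n < n')%N -> f n <> f n'.
    move=> n n' ns ns' lt fe.
    have := hg n n' ns ns' lt.
    have h1 := Num.Theory.truncn_itv (divr_ge0 (ler0n R n) (ltW g0)).
    have h2 := Num.Theory.truncn_itv (divr_ge0 (ler0n R n') (ltW g0)).
    rewrite -/(f n) in h1; rewrite -/(f n') -fe in h2.
    move: h1 h2 => /andP[h1 h1'] /andP[h2 h2'].
    rewrite -natr1 in h1' h2'.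
    have gi : 0 < g^-1 by rewrite invr_gt0.
    rewrite -(ler_pM2r gi) mulfV ?lt0r_neq0 // mulrBl.
    lra.
  move=> n n' ns ns' fe; case: (ltngtP n n') => h.
  - by case: (key _ _ ns ns' h).
  - by case: (key _ _ ns' ns h).
  - by [].
rewrite -(size_map f) -(size_iota 0 (Num.truncn (B / g)).+1).
apply: uniq_leq_size; first by rewrite map_inj_in_uniq.
move=> x /mapP [n ns ->]; rewrite mem_iota /= add0n ltnS.
apply: le_truncn; rewrite ler_wpM2r ?invr_ge0 ?(ltW g0) //; exact: hB.
Qed.

Lemma aux1 (R : realType) (x y t : R) : y != 0 -> x / y * (y / t) = x / t.
Proof. by move=> y0; rewrite mulrA divfK. Qed.

Lemma aux2 (R : realType) (x y p : R) : p != 0 -> x / p / (y / p) = x / y.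
Proof. move=> p0; rewrite invf_div mulrA divfK //. Qed.

Lemma aux3 (R : realType) (m A P B : R) : m * (A * P) * B = m * P * (A * B).
Proof. ring. Qed.

Theorem theorem1p7 (R : realType) (d : nat) (Hd : (2 <= d)%N)
    (D : ('I_d -> R) -> Prop) (alpha : 'I_d -> R) :
  bounded_set D -> convex_set D -> nonempty_interior D ->
  (* sup_{T_1,...,T_d >= 1} L(alpha, D_{T^{-1}}) = infinity *)
  (forall N : nat, exists T : 'I_d -> R,
      (forall i, 1 <= T i) /\ L_ge alpha (scale_inv T D) N) ->
  (* liminf_{n -> oo} n * ||n alpha_1|| ... ||n alpha_d|| = 0
     (the terms are nonnegative) *)
  forall (eps : R), 0 < eps -> forall N : nat, exists n : nat, (N <= n)%N /\
    n%:R * \prod_(i < d) dist_Z (n%:R * alpha i) < eps.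
Proof.
move=> [M hM] _ [x0 [e [e0 he]]] hyp eps eps0 N0.
apply: NNPP => Hn.
have H : forall n, (N0 <= n)%N -> eps <= n%:R * \prod_i dist_Z (n%:R * alpha i).
  move=> n hn; rewrite leNgt; apply/negP => hlt; apply: Hn; exists n; split => //.
have [c [c0 hc]] := @get_BA R d alpha eps N0 eps0 H.
have d0 : (0 < d)%N by apply: leq_trans Hd.
pose e' := Num.min e 1.
have e'0 : 0 < e' by rewrite lt_min e0 ltr01.
have e'e : e' <= e by rewrite ge_min lexx.
have e'1 : e' <= 1 by rewrite ge_min lexx orbT.
pose M' := Num.max M 1.
have M'1 : 1 <= M' by rewrite le_max lexx orbT.
have MM : M <= M' by rewrite le_max lexx.
have hx0 : forall i, `|x0 i| <= M'.
  move=> i; apply: le_trans MM; apply: hM; apply: he => j; rewrite subrr normr0 //.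
have hDb : forall (T : 'I_d -> R) y, (forall i, 1 <= T i) -> scale_inv T D y ->
    forall i, `|y i| <= M' / T i.
  move=> T y hT [x [Dx hy]] i; rewrite hy normrM normfV.
  have T0 : 0 < T i by apply: lt_le_trans (hT i).
  rewrite (gtr0_norm T0) ler_wpM2r ?invr_ge0 ?(ltW T0) //.
  by apply: le_trans MM; apply: hM.
pose R0 := 2 * M' / e'.
have R00 : 0 < R0 by rewrite /R0 !mulr_gt0 ?invr_gt0 //; lra.
have [Kc [Kc0 hK]] := cover alpha c c0 hc d0 R0 R00.
pose g := c * (e' / (4 * M')) ^+ d.
have g0 : 0 < g by rewrite /g mulr_gt0 // exprn_gt0 // divr_gt0 //; lra.
have [T [hT [s [us [ss hs]]]]] := hyp (Num.truncn (Kc / g)).+2.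
have T0 i : 0 < T i by apply: lt_le_trans (hT i).
pose r i := e' / T i.
have hr : forall i, 0 < r i <= 1.
  move=> i; rewrite divr_gt0 //= ler_pdivrMr // mul1r.
  exact: le_trans e'1 (hT i).
pose Pr := \prod_i r i.
have Pr0 : 0 < Pr by apply: prodr_gt0 => i _; have /andP[] := hr i.
have hA : forall n, n \in s -> n%:R <= Kc / Pr.
  move=> n ns; have [q [Dq [n0 [_ hmin]]]] := hs n ns.
  have hq := hDb T q hT Dq.
  pose z i := x0 i / T i - q i.
  have hz : forall i, `|z i| <= R0 * r i.
    move=> i; apply: (le_trans (ler_normB _ _)).
    have -> : R0 * r i = M' / T i + M' / T i.
      by rewrite /R0 /r; field; rewrite (lt0r_neq0 e'0) (lt0r_neq0 (T0 i)).
    apply: lerD (hq i).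
    rewrite normrM normfV (gtr0_norm (T0 i)) ler_wpM2r ?invr_ge0 ?(ltW (T0 i)) //.
  have [m [m0 [mb [k hk]]]] := hK r hr z hz.
  have nm : (n <= m)%N.
    apply: (hmin m m0); exists k.
    exists (fun i => (q i + m%:R * alpha i - (k i)%:~R) * T i); split; last first.
      by move=> i; rewrite mulfK // lt0r_neq0.
    apply: he => i.
    have -> : (q i + m%:R * alpha i - (k i)%:~R) * T i - x0 i
        = T i * (m%:R * alpha i - (k i)%:~R - z i).
      by rewrite /z; field; rewrite lt0r_neq0.
    rewrite normrM gtr0_norm //.
    apply: lt_le_trans e'e.
    have -> : e' = T i * r i by rewrite /r; field; rewrite lt0r_neq0.
    by rewrite ltr_pM2l.
  rewrite ler_pdivlMr //; apply: le_trans mb.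
  by rewrite ler_wpM2r ?(ltW Pr0) // ler_nat.
have hB : forall n n', n \in s -> n' \in s -> (n < n')%N -> g <= (n'%:R - n%:R) * Pr.
  move=> n n' ns ns' lt.
  have [q [Dq [_ [[k Dk] _]]]] := hs n ns.
  have [q' [Dq' [_ [[k' Dk'] _]]]] := hs n' ns'.
  have b1 := hDb T q hT Dq; have b2 := hDb T _ hT Dk.
  have b3 := hDb T q' hT Dq'; have b4 := hDb T _ hT Dk'.
  have hm : forall i, `|(n' - n)%N%:R * alpha i - (k' i - k i)%:~R| <= (4 * M' / e') * r i.
    move=> i.
    have e4 : 4 * (M' / T i) = (4 * M' / e') * r i.
      rewrite /r aux1; [exact: mulrA | exact: lt0r_neq0 e'0].
    suff hm0 : `|(n' - n)%N%:R * alpha i - (k' i - k i)%:~R| <= 4 * (M' / T i).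
      by apply: (le_trans hm0); rewrite le_eqVlt; apply/orP; left; apply/eqP.
    have h1 : `|q i| <= M' / T i := b1 i.
    have h2 : `|q i + n%:R * alpha i - (k i)%:~R| <= M' / T i := b2 i.
    have h3 : `|q' i| <= M' / T i := b3 i.
    have h4 : `|q' i + n'%:R * alpha i - (k' i)%:~R| <= M' / T i := b4 i.
    rewrite (natrB _ (ltnW lt)) intrB.
    move: h1 h2 h3 h4; set A := M' / T i => h1 h2 h3 h4.
    have : (n'%:R - n%:R) * alpha i - ((k' i)%:~R - (k i)%:~R) =
      ((q' i + n'%:R * alpha i - (k' i)%:~R) - q' i) - ((q i + n%:R * alpha i - (k i)%:~R) - q i) by ring.
    move=> ->; set u1 := q' i + _ - _; set u2 := q i + _ - _.
    have := ler_normB (u1 - q' i) (u2 - q i).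
    have := ler_normB u1 (q' i); have := ler_normB u2 (q i).
    clear -h1 h2 h3 h4; lra.
  have nn0 : (0 < n' - n)%N by rewrite subn_gt0.
  have hc1 : c <= (n' - n)%N%:R * \prod_i `|(n' - n)%N%:R * alpha i - ((k' i - k i))%:~R|
    := hc (n' - n)%N nn0 (fun i => k' i - k i).
  have hp : \prod_i `|(n' - n)%N%:R * alpha i - ((k' i - k i))%:~R| <= (4 * M' / e') ^+ d * Pr.
    have pc : \prod_(i < d) (4 * M' / e') = (4 * M' / e') ^+ d by rewrite prodr_const card_ord.
    rewrite /Pr -pc -big_split /=; apply: ler_prod => i _; rewrite normr_ge0 /=.
    exact: hm i.
  have hc2 : c <= (n' - n)%N%:R * ((4 * M' / e') ^+ d * Pr).
    apply: (le_trans hc1).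
    apply: ler_wpM2l.
      exact: ler0n.
    exact hp.
  rewrite -(natrB _ (ltnW lt)) /g.
  have ee : (4 * M' / e') ^+ d * (e' / (4 * M')) ^+ d = 1.
    have M40 : 4 * M' != 0 by rewrite lt0r_neq0 //; lra.
    rewrite -exprMn aux1; last exact: lt0r_neq0 e'0.
    by rewrite mulfV // expr1n.
  have ep : 0 <= (e' / (4 * M')) ^+ d by rewrite exprn_ge0 // divr_ge0 ?ltW //; lra.
  have := ler_wpM2r ep hc2.
  rewrite aux3 ee mulr1 => h; exact h.
have gP : 0 < g / Pr by rewrite divr_gt0.
have hB' : forall n n', n \in s -> n' \in s -> (n < n')%N -> g / Pr <= n'%:R - n%:R.
  by move=> n n' ns ns' lt; rewrite ler_pdivrMr //; exact: hB.
have hcnt := @count_sp R s (Kc / Pr) (g / Pr) gP us hA hB'.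
have ee : Kc / Pr / (g / Pr) = Kc / g by rewrite aux2 // lt0r_neq0.
rewrite ee ss in hcnt.
by rewrite ltnn in hcnt.
Qed.
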